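(* Let $\boldsymbol\phi(n,m,\alpha,\beta,l)\in\mathbb C^N$ satisfy the condition equation set (for all arguments, only the indicated variable shifted) $\sigma_1\boldsymbol\phi(n-1,\cdot,l)=\boldsymbol\phi(n,\cdot,l)-\boldsymbol\phi(n-1,\cdot,l+1)$, $\sigma_2\boldsymbol\phi(m-1,\cdot,l)=\boldsymbol\phi(m,\cdot,l)-\boldsymbol\phi(m-1,\cdot,l+1)$, $\sigma_3\boldsymbol\phi(\alpha-1,\cdot,l)=\boldsymbol\phi(\alpha,\cdot,l)-\boldsymbol\phi(\alpha-1,\cdot,l+1)$, $\sigma_4\boldsymbol\phi(\beta-1,\cdot,l)=\boldsymbol\phi(\beta,\cdot,l)-\boldsymbol\phi(\beta-1,\cdot,l+1)$, and $\boldsymbol K\boldsymbol\phi(l)=\boldsymbol\phi(l+4)-\epsilon_1\boldsymbol\phi(l+3)+\epsilon_2\boldsymbol\phi(l+2)-\epsilon_3\boldsymbol\phi(l+1)$ for a constant $N\times N$ matrix $\boldsymbol K$. Let $f'=|0,\dots,N-1|$, $g'=|0,\dots,N-2,N|$ (Casoratians of $\boldsymbol\phi$). Then, writing $\sigma^-_{ij}=\sigma_i-\sigma_j$, $$\sigma^-_{13}\widetilde f'\dot{\check f}'-\sigma^-_{14}f'\widetilde{\dot{\check f}}'+\sigma^-_{34}\dot f'\widetilde{\check f}'=0,\qquad \sigma^-_{23}\widehat f'\dot{\check f}'-\sigma^-_{24}f'\widehat{\dot{\check f}}'+\sigma^-_{34}\dot f'\widehat{\check f}'=0,$$ $$f'(\sigma_3\widetilde{\check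 f}'+\widetilde{\check g}')+\sigma^-_{13}\widetilde f'\check f'-(\sigma_1f'+g')\widetilde{\check f}'=0,\qquad f'(\sigma_3\widehat{\check f}'+\widehat{\check g}')+\sigma^-_{23}\widehat f'\check f'-(\sigma_2f'+g')\widehat{\check f}'=0,$$ $$\widetilde f'(\sigma_1\dot f'+\dot g')-\sigma^-_{14}f'\widetilde{\dot f}'-(\sigma_4\widetilde f'+\widetilde g')\dot f'=0,\qquad \widehat f'(\sigma_2\dot f'+\dot g')-\sigma^-_{24}f'\widehat{\dot f}'-(\sigma_4\widehat f'+\widehat g')\dot f'=0,$$ $$\sigma^-_{14}\widetilde{\dot f}'\widehat f'-\sigma^-_{24}\widehat{\dot f}'\widetilde f'-\sigma^-_{12}\widehat{\widetilde f}'\dot f'=0,$$ $$(\sigma_3\check f'+\check g')\widehat{\widetilde{\dot f}}'-\check f'(\widehat{\widetilde{\dot g}}'-\sigma_4\widehat{\widetilde{\dot f}}')-\frac{R(\sigma_1,\sigma_4)}{\sigma^-_{12}\sigma^-_{13}}\widehat{\dot f}'\widetilde{\check f}'+\frac{R(\sigma_2,\sigma_4)}{\sigma^-_{12}\sigma^-_{23}}\widetilde{\dot f}'\widehat{\check f}'+(\sigma_1+\sigma_2+\epsilon_1)\check f'\widehat{\widetilde{\dot f}}'-\frac{R(\sigma_3,\sigma_4)}{\sigma^-_{13}\sigma^-_{23}}f'\widehat{\widetilde{\dot{\check f}}}'=0.$$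
   Context: Fix $\alpha_1,\alpha_2,\alpha_3,\delta\in\mathbb C$ and pairwise distinct $p,q,a,b\in\mathbb C$. Put $\sigma_1=p-\delta$, $\sigma_2=q-\delta$, $\sigma_3=a-\delta$, $\sigma_4=b-\delta$; $\epsilon_1=4\delta-\alpha_3$, $\epsilon_2=6\delta^2-3\delta\alpha_3+\alpha_2$, $\epsilon_3=4\delta^3-3\delta^2\alpha_3+2\delta\alpha_2-\alpha_1$; $R(x,y)=(x+y)(x^2+y^2)+\epsilon_1((x+y)^2-xy)+\epsilon_2(x+y)+\epsilon_3$. Casoratian notation: $|l_1,\dots,l_N|=\det(\boldsymbol\phi(l_1),\dots,\boldsymbol\phi(l_N))$ with $\boldsymbol\phi(l)=\boldsymbol\phi(n,m,\alpha,\beta,l)$; a run ''$0,\dots,j$'' with $j<0$ is empty. Shifts: $\widetilde F=F(n+1,m,\alpha,\beta)$, $\widehat F=F(n,m+1,\alpha,\beta)$, $\check F=F(n,m,\alpha-1,\beta)$, $\dot F=F(n,m,\alpha,\beta+1)$, composed as needed. *)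

(* Defs.v *)
From mathcomp Require Import all_boot all_algebra.
From mathcomp Require Import complex reals Rstruct.
Set Implicit Arguments. Unset Strict Implicit. Unset Printing Implicit Defensive.
Import GRing.Theory Num.Theory.
Local Open Scope ring_scope.

Definition CC : numClosedFieldType := Rdefinitions.R[i].

(* phi(n,m,alpha,beta,l) in C^N, as a column vector; all arguments are integers. *)
Definition phiT (N : nat) := int -> int -> int -> int -> int -> 'cV[CC]_N.

(* Casoratian |l_0, ..., l_{N-1}| = det(phi(l_0), ..., phi(l_{N-1})),
   the j-th column being phi(l_j), at fixed (n,m,alpha,beta). *)
Definition casoratian (N : nat) (v : int -> 'cV[CC]_N) (ls : 'I_N -> int) : CC :=
  \det (\matrix_(i < N, j < N) v (ls j) i 0).

Definition fcas (N : nat) (phi : phiT N) (n m al be : int) : CC :=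
  casoratian (phi n m al be) (fun j => (nat_of_ord j)%:Z).

Definition gcas (N : nat) (phi : phiT N) (n m al be : int) : CC :=
  casoratian (phi n m al be)
    (fun j => if nat_of_ord j == N.-1 then N%:Z else (nat_of_ord j)%:Z).

Definition eps1 (a3 d : CC) : CC := 4 * d - a3.
Definition eps2 (a2 a3 d : CC) : CC := 6 * d ^+ 2 - 3 * d * a3 + a2.
Definition eps3 (a1 a2 a3 d : CC) : CC :=
  4 * d ^+ 3 - 3 * d ^+ 2 * a3 + 2 * d * a2 - a1.

Definition Rpol (e1 e2 e3 x y : CC) : CC :=
  (x + y) * (x ^+ 2 + y ^+ 2) + e1 * ((x + y) ^+ 2 - x * y) + e2 * (x + y) + e3.

(* Main.v *)
Require Import Defs.
From mathcomp Require Import all_boot all_algebra.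
From mathcomp Require Import complex reals Rstruct.
From mathcomp Require Import ring.
From Stdlib Require Import FunctionalExtensionality.
Set Implicit Arguments. Unset Strict Implicit. Unset Printing Implicit Defensive.
Import GRing.Theory Num.Theory.
Local Open Scope ring_scope.


Definition mx n (c : nat -> 'I_n -> CC) : 'M[CC]_n := \matrix_(i < n, j < n) c i j.

Definition up N (x : CC) (chi : int -> 'cV[CC]_N) : int -> 'cV[CC]_N :=
  locked (fun l => x *: chi l + chi (l + 1)).

Lemma upE N x (chi : int -> 'cV[CC]_N) l : up x chi l = x *: chi l + chi (l + 1).
Proof. by rewrite /up -lock. Qed.

Definition Fc N (chi : int -> 'cV[CC]_N) : CC :=
  casoratian chi (fun j : 'I_N => (nat_of_ord j)%:Z).
Definition Gc N (chi : int -> 'cV[CC]_N) : CC :=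
  casoratian chi (fun j : 'I_N => if nat_of_ord j == N.-1 then N%:Z else (nat_of_ord j)%:Z).

Lemma FcE N (chi : int -> 'cV[CC]_N) :
  Fc chi = \det (mx (fun i j => chi (i%:Z) j 0)).
Proof. by rewrite /Fc /casoratian -det_tr; congr (\det _); apply/matrixP=> i j; rewrite !mxE. Qed.

Lemma GcE N (chi : int -> 'cV[CC]_N) :
  Gc chi = \det (mx (fun i j => chi (if i == N.-1 then N%:Z else i%:Z) j 0)).
Proof. by rewrite /Gc /casoratian -det_tr; congr (\det _); apply/matrixP=> i j; rewrite !mxE. Qed.

Lemma up_comm N x y (chi : int -> 'cV[CC]_N) : up x (up y chi) = up y (up x chi).
Proof.
apply: functional_extensionality => l; apply/matrixP => i j; rewrite !upE !mxE; ring.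
Qed.

Lemma det_bidiag n (c c' : nat -> 'I_n -> CC) (lam : nat -> CC) :
  (forall (i : nat) j, (i < n)%N -> c' i j = c i j + (if i is k.+1 then lam k * c k j else 0)) ->
  \det (mx c') = \det (mx c).
Proof.
move=> H.
pose T : 'M[CC]_n := \matrix_(i < n, j < n)
  ((i == j)%:R + (if (i : nat) == j.+1 then lam j else 0)).
have -> : mx c' = T *m mx c.
  apply/matrixP => i j; rewrite !mxE H //.
  under eq_bigr do rewrite !mxE mulrDl.
  rewrite big_split /=; congr (_ + _).
    rewrite (bigD1 i) //= eqxx mul1r big1 ?addr0 // => k /negbTE.
    by rewrite eq_sym => ->; rewrite mul0r.
  case: i => [[|k] Hk] /=.
    by rewrite big1 // => kk _; rewrite mul0r.
  have Hk' : (k < n)%N by apply: ltnW.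
  rewrite (bigD1 (Ordinal Hk')) //= eqxx big1 ?addr0 // => kk /eqP Hkk.
  case: eqP => [[e]|]; last by rewrite mul0r.
  by exfalso; apply: Hkk; apply: val_inj; rewrite /= e.
rewrite det_mulmx det_trig; last first.
  apply/is_trig_mxP => i j lt_ij; rewrite !mxE.
  rewrite (_ : (i == j) = false); last by apply/negbTE; rewrite neq_ltn lt_ij.
  rewrite (_ : (i : nat) == j.+1 = false) ?addr0 //.
  by apply/negbTE; rewrite neq_ltn ltnS ltnW.
rewrite big1 ?mul1r // => i _.
by rewrite /T !mxE eqxx (_ : (i : nat) == i.+1 = false) ?addr0 //; apply/negbTE; rewrite neq_ltn ltnSn.
Qed.

Lemma zS (k : nat) : (k%:Z + 1 = (k.+1)%:Z)%R.
Proof. by rewrite intS addrC. Qed.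

Definition h n (chi : int -> 'cV[CC]_n.+1) (m : nat) : CC :=
  \det (mx (fun k j => chi (bump m k)%:Z j 0)).

Lemma expand0 n (chi : int -> 'cV[CC]_n.+1) (rho : nat -> CC) :
  \det (mx (fun (i : nat) (j : 'I_n.+2) => if (j : nat) is r.+1 then chi i%:Z (inord r) 0 else rho i))
  = \sum_(m < n.+2) rho m * (-1) ^+ m * h chi m.
Proof.
rewrite (expand_det_col _ ord0); apply: eq_bigr => i _.
rewrite /cofactor !mxE /= addn0 mulrA; congr (_ * \det _).
by apply/matrixP => a b; rewrite !mxE /= inord_val.
Qed.

Lemma theta n (chi : int -> 'cV[CC]_n.+1) x :
  Fc (up x chi) = \sum_(m < n.+2) x ^+ m * h chi m.
Proof.
pose c := fun (i : nat) (j : 'I_n.+2) => if (j : nat) is r.+1 then chi i%:Z (inord r) 0 else (-x) ^+ i.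
have := expand0 chi (fun i => (-x) ^+ i).
rewrite (_ : \sum_(m < n.+2) _ = \sum_(m < n.+2) x ^+ m * h chi m); last first.
  by apply: eq_bigr => m _; rewrite -exprMn mulrN1 opprK.
move=> <-.
pose c' := fun (i : nat) (j : 'I_n.+2) => if i is k.+1 then
   (if (j : nat) is r.+1 then up x chi k%:Z (inord r) 0 else 0) else c 0%N j.
rewrite -(@det_bidiag _ c c' (fun _ => x)); last first.
  move=> [|k] j _ /=; first by rewrite addr0.
  rewrite /c; case: (nat_of_ord j) => [|r].
    by rewrite exprS; ring.
  by rewrite upE !mxE zS addrC.
rewrite (expand_det_col _ ord0) (bigD1 ord0) //= big1 ?addr0; last first.
  by move=> [[|i] Hi] // _; rewrite !mxE /= mul0r.
rewrite !mxE /c /= mul1r /cofactor /= expr0 mul1r FcE; congr (\det _).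
by apply/matrixP => a b; rewrite !mxE /c' /= !add0n inord_val.
Qed.

Lemma cramer n (chi : int -> 'cV[CC]_n.+1) :
  \sum_(m < n.+2) ((-1) ^+ m * h chi m) *: chi m%:Z = 0.
Proof.
apply/matrixP => r c0; rewrite summxE [RHS]mxE.
have := expand0 chi (fun i => chi i%:Z r 0).
rewrite (_ : \sum_(m < n.+2) _ = \sum_(m < n.+2) (((-1) ^+ m * h chi m) *: chi m%:Z) r c0); last first.
  by apply: eq_bigr => m _; rewrite !mxE (ord1 c0); ring.
move=> <-; rewrite -det_tr.
apply: (@determinant_alternate _ _ _ ord0 (lift ord0 r)); first exact: neq_lift.
by move=> k; rewrite !mxE /= inord_val.
Qed.

Definition ins m (c : nat -> 'I_m -> CC) (v : 'I_m -> CC) (k : nat) : nat -> 'I_m -> CC :=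
  fun i j => if (i < k)%N then c i j else if i == k then v j else c i.-1 j.

Lemma det_ins m (c : nat -> 'I_m.+1 -> CC) (v : 'I_m.+1 -> CC) (k : 'I_m.+1) :
  \det (mx (ins c v 0)) = (-1) ^+ k * \det (mx (ins c v k)).
Proof.
rewrite (expand_det_row _ ord0) (expand_det_row _ k) big_distrr; apply: eq_bigr => j _.
rewrite !mxE /ins /= ltnn eqxx /cofactor.
have -> : row' ord0 (col' j (mx (ins c v 0))) = row' k (col' j (mx (ins c v k))).
  apply/matrixP => a b; rewrite !mxE /ins /= /bump.
  case: (leqP k a) => [ka|ak] /=; rewrite add0n.
    rewrite (_ : (a.+1 < k)%N = false); last by rewrite ltnNge (leqW ka).
    by rewrite gtn_eqF.
  by rewrite ak.
rewrite add0n exprD !mulrA [_ * v j]mulrC -!mulrA; congr (_ * _).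
by rewrite !mulrA -expr2 sqrr_sign mul1r.
Qed.

Definition ell n (c : nat -> 'I_n -> CC) (p : 'I_n) : 'rV[CC]_n :=
  \row_j cofactor (mx (fun i j => if i == p then 0 else c i j)) p j.

Lemma rowlinE n (c : nat -> 'I_n -> CC) (p : 'I_n) (v : 'cV[CC]_n) :
  \det (mx (fun i j => if i == p then v j 0 else c i j)) = (ell c p *m v) 0 0.
Proof.
rewrite (expand_det_row _ p) mxE; apply: eq_bigr => j _; rewrite !mxE eqxx mulrC.
congr (_ * _); rewrite /cofactor; congr (_ * \det _).
by apply/matrixP => a b; rewrite !mxE; have /negbTE -> : (lift p a : nat) != p by rewrite eq_sym; exact: (neq_lift p a).
Qed.

Definition lv n (l : 'rV[CC]_n) (v : 'cV[CC]_n) : CC := (l *m v) 0 0.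

Lemma lvD n (l : 'rV[CC]_n) u v : lv l (u + v) = lv l u + lv l v.
Proof. by rewrite /lv mulmxDr mxE. Qed.
Lemma lvZ n (l : 'rV[CC]_n) a u : lv l (a *: u) = a * lv l u.
Proof. by rewrite /lv -scalemxAr mxE. Qed.
Lemma lvN n (l : 'rV[CC]_n) u : lv l (- u) = - lv l u.
Proof. by rewrite /lv mulmxN mxE. Qed.
Lemma lvB n (l : 'rV[CC]_n) u v : lv l (u - v) = lv l u - lv l v.
Proof. by rewrite lvD lvN. Qed.
Lemma lv0 n (l : 'rV[CC]_n) : lv l 0 = 0.
Proof. by rewrite /lv mulmx0 mxE. Qed.
Lemma lv_sum n (l : 'rV[CC]_n) k (F : 'I_k -> 'cV[CC]_n) :
  lv l (\sum_(i < k) F i) = \sum_(i < k) lv l (F i).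
Proof. by rewrite /lv mulmx_sumr summxE. Qed.

Definition ellP n (Phi : int -> 'cV[CC]_n.+1) : 'rV[CC]_n.+1 :=
  ell (fun i j => Phi (i.-1)%:Z j 0) ord0.

Lemma LP n (Phi : int -> 'cV[CC]_n.+1) (v : 'cV[CC]_n.+1) :
  \det (mx (fun i j => if i == 0%N then v j 0 else Phi (i.-1)%:Z j 0)) = lv (ellP Phi) v.
Proof. exact: (@rowlinE n.+1 (fun i j => Phi (i.-1)%:Z j 0) ord0 v). Qed.

Lemma DN n (Phi a : int -> 'cV[CC]_n.+1) x :
  (forall l, Phi l = up x a l) -> Fc a = lv (ellP Phi) (a 0%:Z).
Proof.
move=> HP; rewrite FcE -LP; symmetry; apply: (@det_bidiag _ _ _ (fun _ => x)).
move=> [|k] j _ /=; first by rewrite addr0.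
by rewrite HP upE !mxE zS; ring.
Qed.

Definition rseq n x (a : int -> 'cV[CC]_n) (m : nat) : 'cV[CC]_n :=
  x ^+ m *: a 0%:Z - (-1) ^+ m *: a m%:Z.

Lemma rrec n (Phi a : int -> 'cV[CC]_n) x m :
  (forall l, Phi l = up x a l) ->
  rseq x a m.+1 = x *: rseq x a m + (-1) ^+ m *: Phi m%:Z.
Proof.
move=> HP; rewrite HP /rseq upE -zS; apply/matrixP => i j; rewrite !mxE !exprS; ring.
Qed.

Lemma rzero n (Phi a : int -> 'cV[CC]_n) x (l : 'rV[CC]_n) K :
  (forall l, Phi l = up x a l) ->
  (forall t, (t < K)%N -> lv l (Phi t%:Z) = 0) ->
  forall m, (m <= K)%N -> lv l (rseq x a m) = 0.
Proof.
move=> HP HZ; elim => [|m IH] Hm.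
  by rewrite /rseq !expr0 !scale1r subrr lv0.
by rewrite (rrec m HP) lvD !lvZ IH ?HZ ?mulr0 ?addr0 // ltnW.
Qed.

Lemma GEN n (psi Phi a : int -> 'cV[CC]_n.+1) x (l : 'rV[CC]_n.+1) :
  (forall l, Phi l = up x a l) ->
  Fc (up x psi) * lv l (a 0%:Z) =
  lv l (\sum_(m < n.+2) ((-1) ^+ m * h psi m) *: a m%:Z)
  + \sum_(m < n.+2) h psi m * lv l (rseq x a m).
Proof.
move=> HP; rewrite theta big_distrl lv_sum -big_split; apply: eq_bigr => m _ /=.
by rewrite lvZ /rseq lvB !lvZ; ring.
Qed.

Lemma LPzero n (Phi : int -> 'cV[CC]_n.+1) t :
  (t < n)%N -> lv (ellP Phi) (Phi t%:Z) = 0.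
Proof.
move=> Ht; rewrite -LP.
have Ht1 : (t.+1 < n.+1)%N by [].
apply: (@determinant_alternate _ _ _ ord0 (Ordinal Ht1)) => // j.
by rewrite !mxE.
Qed.

Lemma PAIR n (psi Phi a : int -> 'cV[CC]_n.+1) x :
  (forall l, Phi l = up x a l) ->
  Fc (up x psi) * Fc a =
  lv (ellP Phi) (\sum_(m < n.+2) ((-1) ^+ m * h psi m) *: a m%:Z)
  + h psi n.+1 * ((-1) ^+ n * lv (ellP Phi) (Phi n%:Z)).
Proof.
move=> HP; rewrite (DN HP) (GEN _ _ HP); congr (_ + _).
rewrite big_ord_recr /= big1 ?add0r; last first.
  move=> m _; rewrite (rzero HP (K := n)) ?mulr0 //; last by rewrite -ltnS.
  by move=> t Ht; rewrite LPzero.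
by rewrite (rrec n HP) lvD !lvZ (rzero HP (K := n)) ?mulr0 ?add0r // => t Ht; rewrite LPzero.
Qed.

Lemma LPF n (Phi : int -> 'cV[CC]_n.+1) :
  lv (ellP Phi) (Phi n%:Z) = (-1) ^+ n * Fc Phi.
Proof.
rewrite -LP FcE.
pose c := fun (i : nat) (j : 'I_n.+1) => Phi i%:Z j 0.
have E1 : mx (fun i j => if i == 0%N then Phi n%:Z j 0 else Phi (i.-1)%:Z j 0)
   = mx (ins c (fun j => Phi n%:Z j 0) 0).
  by apply/matrixP => i j; rewrite !mxE /ins; case: (nat_of_ord i).
have E2 : mx (ins c (fun j => Phi n%:Z j 0) n) = mx (fun i j => Phi i%:Z j 0).
  apply/matrixP => i j; rewrite !mxE /ins /=.
  case: ltnP => // Hi.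
  have -> : (i : nat) = n by apply/eqP; rewrite eqn_leq Hi -ltnS ltn_ord.
  by rewrite eqxx.
by rewrite E1 (det_ins _ _ ord_max) E2.
Qed.

Lemma LPG n (Phi : int -> 'cV[CC]_n.+1) :
  lv (ellP Phi) (Phi (n.+1)%:Z) = (-1) ^+ n * Gc Phi.
Proof.
rewrite -LP GcE.
pose c := fun (i : nat) (j : 'I_n.+1) => Phi i%:Z j 0.
have E1 : mx (fun i j => if i == 0%N then Phi (n.+1)%:Z j 0 else Phi (i.-1)%:Z j 0)
   = mx (ins c (fun j => Phi (n.+1)%:Z j 0) 0).
  by apply/matrixP => i j; rewrite !mxE /ins; case: (nat_of_ord i).
have E2 : mx (ins c (fun j => Phi (n.+1)%:Z j 0) n) = mx (fun i j => Phi (if i == n.+1.-1 then (n.+1)%:Z else i%:Z) j 0).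
  apply/matrixP => i j; rewrite !mxE /ins /=.
  case: ltnP => Hi; first by rewrite ltn_eqF.
  have -> : (i : nat) = n by apply/eqP; rewrite eqn_leq Hi -ltnS ltn_ord.
  by rewrite eqxx.
by rewrite E1 (det_ins _ _ ord_max) E2.
Qed.

Lemma hN n (psi : int -> 'cV[CC]_n.+1) : h psi n.+1 = Fc psi.
Proof.
rewrite FcE /h; congr (\det _); apply/matrixP => i j; rewrite !mxE /bump.
by rewrite leqNgt ltn_ord.
Qed.

Lemma hN1 n (psi : int -> 'cV[CC]_n.+1) : h psi n = Gc psi.
Proof.
rewrite GcE /h; congr (\det _); apply/matrixP => i j; rewrite !mxE /bump /=.
case: leqP => Hi.
  have -> : (i : nat) = n by apply/eqP; rewrite eqn_leq Hi -ltnS ltn_ord.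
  by rewrite eqxx.
by rewrite ltn_eqF.
Qed.

Lemma lvup n (l : 'rV[CC]_n) x (chi : int -> 'cV[CC]_n) m :
  lv l (up x chi m) = x * lv l (chi m) + lv l (chi (m + 1)).
Proof. by rewrite upE lvD lvZ. Qed.

Lemma lvZup2 n (l : 'rV[CC]_n) w x y (chi : int -> 'cV[CC]_n) m :
  lv l (w *: up x (up y chi) m) =
  w * (x * (y * lv l (chi m) + lv l (chi (m + 1)))
       + (y * lv l (chi (m + 1)) + lv l (chi (m + 1 + 1)))).
Proof. by rewrite lvZ !lvup. Qed.

Lemma lvZsum n (l : 'rV[CC]_n) k (w : 'I_k -> CC) (F : 'I_k -> 'cV[CC]_n) :
  lv l (\sum_(i < k) w i *: F i) = \sum_(i < k) w i * lv l (F i).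
Proof. by rewrite lv_sum; apply: eq_bigr => i _; rewrite lvZ. Qed.

Lemma algT3 (a b c Fab Fc_ Fb Fac Fbc Fa Sa Sb Sc X : CC) :
  Fa * Fbc = Sa + X -> Fb * Fac = Sb + X -> Fc_ * Fab = Sc + X ->
  (b - c) * Sa - (a - c) * Sb + (a - b) * Sc = 0 ->
  (a - b) * Fab * Fc_ - (a - c) * Fb * Fac + (b - c) * Fbc * Fa = 0.
Proof.
move=> H1 H2 H3 H4.
have -> : (a - b) * Fab * Fc_ - (a - c) * Fb * Fac + (b - c) * Fbc * Fa =
   (b - c) * (Fa * Fbc) - (a - c) * (Fb * Fac) + (a - b) * (Fc_ * Fab) by ring.
rewrite H1 H2 H3 -H4; ring.
Qed.

Lemma T3 n (psi : int -> 'cV[CC]_n.+1) (a b c : CC) :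
  (a - b) * Fc (up a (up b psi)) * Fc (up c psi)
  - (a - c) * Fc (up b psi) * Fc (up a (up c psi))
  + (b - c) * Fc (up b (up c psi)) * Fc (up a psi) = 0.
Proof.
have Eb : up a (up b (up c psi)) = up b (up a (up c psi)) := up_comm a b _.
have Ec : up a (up b (up c psi)) = up c (up a (up b psi)) :=
  etrans (congr1 (up a) (up_comm b c psi)) (up_comm a c _).
have Ha : forall l, up a (up b (up c psi)) l = up a (up b (up c psi)) l := fun l => erefl.
have Hb : forall l, up a (up b (up c psi)) l = up b (up a (up c psi)) l :=
  fun l => congr1 (fun f => f l) Eb.
have Hc : forall l, up a (up b (up c psi)) l = up c (up a (up b psi)) l :=
  fun l => congr1 (fun f => f l) Ec.
have Pa := PAIR psi Ha; have Pb := PAIR psi Hb; have Pc := PAIR psi Hc.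
set Phi := up a (up b (up c psi)) in Pa Pb Pc.
set L := ellP Phi in Pa Pb Pc.
rewrite lv_sum in Pa; rewrite lv_sum in Pb; rewrite lv_sum in Pc.
set X := h psi n.+1 * _ in Pa Pb Pc.
set Sa := \sum_(m < n.+2) _ in Pa.
set Sb := \sum_(m < n.+2) _ in Pb.
set Sc := \sum_(m < n.+2) _ in Pc.
have HV : (b - c) * Sa - (a - c) * Sb + (a - b) * Sc = 0.
  have Ea : Sa = \sum_(m < n.+2) ((-1) ^+ m * h psi m) * (b * (c * lv L (psi m) + lv L (psi (m%:Z + 1)))
       + (c * lv L (psi (m%:Z + 1)) + lv L (psi (m%:Z + 1 + 1)))).
    by apply: eq_bigr => m _; exact: lvZup2.
  have Eb' : Sb = \sum_(m < n.+2) ((-1) ^+ m * h psi m) * (a * (c * lv L (psi m) + lv L (psi (m%:Z + 1)))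
       + (c * lv L (psi (m%:Z + 1)) + lv L (psi (m%:Z + 1 + 1)))).
    by apply: eq_bigr => m _; exact: lvZup2.
  have Ec' : Sc = \sum_(m < n.+2) ((-1) ^+ m * h psi m) * (a * (b * lv L (psi m) + lv L (psi (m%:Z + 1)))
       + (b * lv L (psi (m%:Z + 1)) + lv L (psi (m%:Z + 1 + 1)))).
    by apply: eq_bigr => m _; exact: lvZup2.
  have Cr := congr1 (lv L) (cramer psi); rewrite lvZsum lv0 in Cr.
  rewrite Ea Eb' Ec' !mulr_sumr -sumrB -big_split /=.
  pose lam := (b - c) * b * c - (a - c) * a * c + (a - b) * a * b.
  transitivity (lam * \sum_(m < n.+2) ((-1) ^+ m * h psi m) * lv L (psi m)); last by rewrite Cr mulr0.
  rewrite mulr_sumr; apply: eq_bigr => m _; rewrite /lam; ring.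
exact: (algT3 Pa Pb Pc HV).
Qed.


Lemma lvU3 n (l : 'rV[CC]_n) x y z (chi : int -> 'cV[CC]_n) m :
  lv l (up x (up y (up z chi)) m) = (x * ((y * ((z * (lv l (chi (m))) + (lv l (chi (m + 1))))) + ((z * (lv l (chi (m + 1))) + (lv l (chi (m + 1 + 1))))))) + ((y * ((z * (lv l (chi (m + 1))) + (lv l (chi (m + 1 + 1))))) + ((z * (lv l (chi (m + 1 + 1))) + (lv l (chi (m + 1 + 1 + 1)))))))).
Proof. by rewrite !lvup. Qed.

Lemma lvU4 n (l : 'rV[CC]_n) x y z u (chi : int -> 'cV[CC]_n) m :
  lv l (up x (up y (up z (up u chi))) m) = (x * ((y * ((z * ((u * (lv l (chi (m))) + (lv l (chi (m + 1))))) + ((u * (lv l (chi (m + 1))) + (lv l (chi (m + 1 + 1))))))) + ((z * ((u * (lv l (chi (m + 1))) + (lv l (chi (m + 1 + 1))))) + ((u * (lv l (chi (m + 1 + 1))) + (lv l (chi (m + 1 + 1 + 1))))))))) + ((y * ((z * ((u * (lv l (chi (m + 1))) + (lv l (chi (m + 1 + 1))))) + ((u * (lv l (chi (m + 1 + 1))) + (lv l (chi (m + 1 + 1 + 1))))))) + ((z * ((u * (lv l (chi (m + 1 + 1))) + (lv l (chi (m + 1 + 1 + 1))))) + ((u * (lv l (chi (m + 1 + 1 + 1))) + (lv l (chi (m + 1 + 1 + 1 + 1)))))))))).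
Proof. by rewrite !lvup. Qed.

Lemma lvK n (l : 'rV[CC]_n) (a b c d : 'cV[CC]_n) e1 e2 e3 :
  lv l (a - e1 *: b + e2 *: c - e3 *: d) = lv l a - e1 * lv l b + e2 * lv l c - e3 * lv l d.
Proof. by rewrite lvB lvD lvB !lvZ. Qed.

Lemma i4 (l : int) : l + 4 = l + 1 + 1 + 1 + 1. Proof. ring. Qed.
Lemma i3 (l : int) : l + 3 = l + 1 + 1 + 1. Proof. ring. Qed.
Lemma i2 (l : int) : l + 2 = l + 1 + 1. Proof. ring. Qed.

Lemma algE8 (x1 x2 x3 x4 e1 e2 e3 s Fpsi Gpsi FPhi GPhi F1 F2 F3 A1 A2 A3 S1 S2 S3 Ln Ln1 : CC) :
  x1 != x2 -> x1 != x3 -> x2 != x3 -> (s = 1 \/ s = -1) ->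
  F1 * A1 = S1 + Fpsi * (s * Ln) ->
  F2 * A2 = S2 + Fpsi * (s * Ln) ->
  F3 * A3 = S3 + Fpsi * (s * Ln) ->
  Rpol e1 e2 e3 x1 x4 / ((x1 - x2) * (x1 - x3)) * S1
  - Rpol e1 e2 e3 x2 x4 / ((x1 - x2) * (x2 - x3)) * S2
  + Rpol e1 e2 e3 x3 x4 / ((x1 - x3) * (x2 - x3)) * S3
  = s * Gpsi * Ln + (-1 * s * Fpsi) * Ln1 ->
  Ln = s * FPhi -> Ln1 = s * GPhi ->
  (x3 * Fpsi + Gpsi) * FPhi - Fpsi * (GPhi - x4 * FPhi)
  - Rpol e1 e2 e3 x1 x4 / ((x1 - x2) * (x1 - x3)) * A1 * F1
  + Rpol e1 e2 e3 x2 x4 / ((x1 - x2) * (x2 - x3)) * A2 * F2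
  + (x1 + x2 + e1) * Fpsi * FPhi
  - Rpol e1 e2 e3 x3 x4 / ((x1 - x3) * (x2 - x3)) * F3 * A3 = 0.
Proof.
move=> h12 h13 h23 hs P1 P2 P3 HS hL hL1.
set c1 := Rpol e1 e2 e3 x1 x4 / ((x1 - x2) * (x1 - x3)) in HS *.
set c2 := Rpol e1 e2 e3 x2 x4 / ((x1 - x2) * (x2 - x3)) in HS *.
set c3 := Rpol e1 e2 e3 x3 x4 / ((x1 - x3) * (x2 - x3)) in HS *.
have -> : (x3 * Fpsi + Gpsi) * FPhi - Fpsi * (GPhi - x4 * FPhi) - c1 * A1 * F1
  + c2 * A2 * F2 + (x1 + x2 + e1) * Fpsi * FPhi - c3 * F3 * A3
  = (x3 * Fpsi + Gpsi) * FPhi - Fpsi * (GPhi - x4 * FPhi) + (x1 + x2 + e1) * Fpsi * FPhi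
    - (c1 * (F1 * A1) - c2 * (F2 * A2) + c3 * (F3 * A3)) by ring.
rewrite P1 P2 P3.
have -> : c1 * (S1 + Fpsi * (s * Ln)) - c2 * (S2 + Fpsi * (s * Ln)) + c3 * (S3 + Fpsi * (s * Ln))
  = (c1 * S1 - c2 * S2 + c3 * S3) + (c1 - c2 + c3) * (Fpsi * (s * Ln)) by ring.
rewrite HS hL hL1 /c1 /c2 /c3 /Rpol.
have d12 : x1 - x2 != 0 by rewrite subr_eq0.
have d13 : x1 - x3 != 0 by rewrite subr_eq0.
have d23 : x2 - x3 != 0 by rewrite subr_eq0.
by case: hs => ->; field; rewrite ?d12 ?d13 ?d23.
Qed.

Lemma sign_cases n : (-1) ^+ n = 1 :> CC \/ (-1) ^+ n = -1 :> CC.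
Proof. by rewrite -signr_odd; case: (odd n); [right | left]. Qed.

Lemma sumPhi n (psi Phi : int -> 'cV[CC]_n.+1) :
  \sum_(m < n.+2) ((-1) ^+ m * h psi m) * lv (ellP Phi) (Phi m%:Z)
  = (-1) ^+ n * h psi n * lv (ellP Phi) (Phi n%:Z)
    + (-1 * (-1) ^+ n * h psi n.+1) * lv (ellP Phi) (Phi (n.+1)%:Z).
Proof.
rewrite big_ord_recr big_ord_recr /= big1 ?add0r; last first.
  by move=> m _; rewrite LPzero ?mulr0.
by rewrite exprS.
Qed.

Lemma E8L n (psi : int -> 'cV[CC]_n.+1) (K : 'M[CC]_n.+1) (x1 x2 x3 x4 e1 e2 e3 : CC) :
  x1 != x2 -> x1 != x3 -> x2 != x3 ->
  (forall l, K *m psi l = psi (l + 4) - e1 *: psi (l + 3) + e2 *: psi (l + 2) - e3 *: psi (l + 1)) ->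
  (x3 * Fc psi + Gc psi) * Fc (up x1 (up x2 (up x3 (up x4 psi))))
  - Fc psi * (Gc (up x1 (up x2 (up x3 (up x4 psi)))) - x4 * Fc (up x1 (up x2 (up x3 (up x4 psi)))))
  - Rpol e1 e2 e3 x1 x4 / ((x1 - x2) * (x1 - x3)) * Fc (up x2 (up x3 (up x4 psi))) * Fc (up x1 psi)
  + Rpol e1 e2 e3 x2 x4 / ((x1 - x2) * (x2 - x3)) * Fc (up x1 (up x3 (up x4 psi))) * Fc (up x2 psi)
  + (x1 + x2 + e1) * Fc psi * Fc (up x1 (up x2 (up x3 (up x4 psi))))
  - Rpol e1 e2 e3 x3 x4 / ((x1 - x3) * (x2 - x3)) * Fc (up x3 psi) * Fc (up x1 (up x2 (up x4 psi))) = 0.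
Proof.
move=> h12 h13 h23 hK.
have hK' : forall l, K *m psi l = psi (l + 1 + 1 + 1 + 1) - e1 *: psi (l + 1 + 1 + 1)
    + e2 *: psi (l + 1 + 1) - e3 *: psi (l + 1).
  by move=> l; rewrite hK i4 i3 i2.
have E2 : up x1 (up x2 (up x3 (up x4 psi))) = up x2 (up x1 (up x3 (up x4 psi))) := up_comm x1 x2 _.
have E3 : up x1 (up x2 (up x3 (up x4 psi))) = up x3 (up x1 (up x2 (up x4 psi))) :=
  etrans (congr1 (up x1) (up_comm x2 x3 (up x4 psi))) (up_comm x1 x3 _).
have H1 : forall l, up x1 (up x2 (up x3 (up x4 psi))) l = up x1 (up x2 (up x3 (up x4 psi))) l :=
  fun l => erefl.
have H2 : forall l, up x1 (up x2 (up x3 (up x4 psi))) l = up x2 (up x1 (up x3 (up x4 psi))) l :=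
  fun l => congr1 (fun f => f l) E2.
have H3 : forall l, up x1 (up x2 (up x3 (up x4 psi))) l = up x3 (up x1 (up x2 (up x4 psi))) l :=
  fun l => congr1 (fun f => f l) E3.
have P1 := PAIR psi H1; have P2 := PAIR psi H2; have P3 := PAIR psi H3.
rewrite lv_sum hN in P1; rewrite lv_sum hN in P2; rewrite lv_sum hN in P3.
set L := ellP _ in P1 P2 P3.
set S1 := \sum_(m < n.+2) _ in P1.
set S2 := \sum_(m < n.+2) _ in P2.
set S3 := \sum_(m < n.+2) _ in P3.
have Cr := congr1 (lv L) (cramer psi); rewrite lvZsum lv0 in Cr.
have CrK : \sum_(m < n.+2) ((-1) ^+ m * h psi m) * lv L (K *m psi m%:Z) = 0.
  transitivity (lv L (K *m \sum_(m < n.+2) ((-1) ^+ m * h psi m) *: psi m%:Z)); last first.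
    by rewrite cramer mulmx0 lv0.
  rewrite mulmx_sumr lv_sum; apply: eq_bigr => m _; rewrite -scalemxAr lvZ.
  done.
pose mu := x4 ^+ 4 + e1 * x4 ^+ 3 + e2 * x4 ^+ 2 + e3 * x4.
have HS : Rpol e1 e2 e3 x1 x4 / ((x1 - x2) * (x1 - x3)) * S1
  - Rpol e1 e2 e3 x2 x4 / ((x1 - x2) * (x2 - x3)) * S2
  + Rpol e1 e2 e3 x3 x4 / ((x1 - x3) * (x2 - x3)) * S3
  = \sum_(m < n.+2) ((-1) ^+ m * h psi m) * lv L (up x1 (up x2 (up x3 (up x4 psi))) m%:Z)
    - \sum_(m < n.+2) ((-1) ^+ m * h psi m) * lv L (K *m psi m%:Z)
    + mu * \sum_(m < n.+2) ((-1) ^+ m * h psi m) * lv L (psi m%:Z).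
  rewrite /S1 /S2 /S3 !mulr_sumr -sumrB -big_split -sumrB -big_split /=.
  apply: eq_bigr => m _.
  rewrite (lvZ L _ (up x2 (up x3 (up x4 psi)) m%:Z)) (lvZ L _ (up x1 (up x3 (up x4 psi)) m%:Z)).
  rewrite (lvZ L _ (up x1 (up x2 (up x4 psi)) m%:Z)).
  rewrite (lvU3 L x2 x3 x4 psi m%:Z) (lvU3 L x1 x3 x4 psi m%:Z) (lvU3 L x1 x2 x4 psi m%:Z).
  rewrite (lvU4 L x1 x2 x3 x4 psi m%:Z) (hK' m%:Z) lvK /mu /Rpol.
  have d12 : x1 - x2 != 0 by rewrite subr_eq0.
  have d13 : x1 - x3 != 0 by rewrite subr_eq0.
  have d23 : x2 - x3 != 0 by rewrite subr_eq0.
  by field; rewrite ?d12 ?d13 ?d23.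
rewrite CrK Cr mulr0 subr0 addr0 sumPhi hN hN1 in HS.
apply: (algE8 h12 h13 h23 (sign_cases n) P1 P2 P3 HS (LPF _) (LPG _)).
Qed.


Definition ellQ n (Phi : int -> 'cV[CC]_n.+2) : 'rV[CC]_n.+2 :=
  ell (fun i j => if i == n.+1 then Phi (n.+1)%:Z j 0 else Phi (i.-1)%:Z j 0) ord0.

Lemma LQ n (Phi : int -> 'cV[CC]_n.+2) (v : 'cV[CC]_n.+2) :
  \det (mx (fun i j => if i == 0%N then v j 0 else
      (if i == n.+1 then Phi (n.+1)%:Z j 0 else Phi (i.-1)%:Z j 0))) = lv (ellQ Phi) v.
Proof.
exact: (@rowlinE n.+2 (fun i j => if i == n.+1 then Phi (n.+1)%:Z j 0 else Phi (i.-1)%:Z j 0) ord0 v).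
Qed.

Lemma MG n (Phi a : int -> 'cV[CC]_n.+2) z :
  (forall l, Phi l = up z a l) -> z * Fc a + Gc a = lv (ellQ Phi) (a 0%:Z).
Proof.
move=> HP; rewrite -LQ FcE GcE.
transitivity (\det (mx (fun i j => if i == n.+1 then Phi (n.+1)%:Z j 0 else a i%:Z j 0))).
  symmetry; rewrite -[X in _ = _ + X]mul1r.
  apply: (@determinant_multilinear _ _ _ _ _ ord_max).
  - apply/matrixP => i j; rewrite !mxE /= eqxx HP upE !mxE zS; ring.
  - apply/matrixP => i j; rewrite !mxE lift_max.
    by rewrite ltn_eqF.
  - apply/matrixP => i j; rewrite !mxE lift_max /=.
    by rewrite !ltn_eqF.
symmetry; apply: (@det_bidiag _ _ _ (fun k => if k == n then 0 else z)).
move=> [|k] j Hk /=; first by rewrite addr0.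
case: (boolP (k == n)) => Ek.
  by rewrite eqSS Ek mul0r addr0.
rewrite eqSS (negbTE Ek) (_ : (k == n.+1) = false); last first.
  by apply/negbTE; rewrite neq_ltn -ltnS Hk.
by rewrite HP upE !mxE zS; ring.
Qed.

Lemma LQzero1 n (Phi : int -> 'cV[CC]_n.+2) t :
  (t < n)%N -> lv (ellQ Phi) (Phi t%:Z) = 0.
Proof.
move=> Ht; rewrite -LQ.
have Ht1 : (t.+1 < n.+2)%N by rewrite ltnS ltnW.
apply: (@determinant_alternate _ _ _ ord0 (Ordinal Ht1)) => // j.
by rewrite !mxE /= ltn_eqF.
Qed.

Lemma LQzero2 n (Phi : int -> 'cV[CC]_n.+2) :
  lv (ellQ Phi) (Phi (n.+1)%:Z) = 0.
Proof.
rewrite -LQ.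
apply: (@determinant_alternate _ _ _ ord0 ord_max) => // j.
by rewrite !mxE /= eqxx.
Qed.

Lemma LQsign n (Phi : int -> 'cV[CC]_n.+2) :
  lv (ellQ Phi) (Phi n%:Z) = (-1) ^+ n * Fc Phi.
Proof.
rewrite -LQ FcE.
pose c := fun (i : nat) (j : 'I_n.+2) => if i == n then Phi (n.+1)%:Z j 0 else Phi i%:Z j 0.
have Hn : (n < n.+2)%N by rewrite leqW.
have E1 : mx (fun i j => if i == 0%N then Phi n%:Z j 0 else
      (if i == n.+1 then Phi (n.+1)%:Z j 0 else Phi (i.-1)%:Z j 0))
   = mx (ins c (fun j => Phi n%:Z j 0) 0).
  by apply/matrixP => i j; rewrite !mxE /ins; case: (nat_of_ord i) => //= k; rewrite eqSS.
have E2 : mx (ins c (fun j => Phi n%:Z j 0) n) = mx (fun i j => Phi i%:Z j 0).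
  apply/matrixP => i j; rewrite !mxE /ins /c /=.
  case: ltnP => Hi; first by rewrite ltn_eqF.
  case: eqP => [->|NE] //.
  have Ei : (i : nat) = n.+1.
    by apply/eqP; rewrite eqn_leq -ltnS ltn_ord /= ltn_neqAle eq_sym Hi andbT; apply/eqP.
  by rewrite Ei eqxx.
by rewrite E1 (det_ins _ _ (Ordinal Hn)) E2.
Qed.

Lemma rsumQ n (psi Phi a : int -> 'cV[CC]_n.+2) x :
  (forall l, Phi l = up x a l) ->
  \sum_(m < n.+3) h psi m * lv (ellQ Phi) (rseq x a m)
  = (h psi n.+1 + h psi n.+2 * x) * ((-1) ^+ n * lv (ellQ Phi) (Phi n%:Z)).
Proof.
move=> HP.
have Z : forall t, (t < n)%N -> lv (ellQ Phi) (Phi t%:Z) = 0 by move=> t; apply: LQzero1.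
have r1 : lv (ellQ Phi) (rseq x a n.+1) = (-1) ^+ n * lv (ellQ Phi) (Phi n%:Z).
  by rewrite (rrec n HP) lvD !lvZ (rzero HP Z) // mulr0 add0r.
have r2 : lv (ellQ Phi) (rseq x a n.+2) = x * ((-1) ^+ n * lv (ellQ Phi) (Phi n%:Z)).
  by rewrite (rrec n.+1 HP) lvD !lvZ r1 LQzero2 mulr0 addr0.
rewrite big_ord_recr big_ord_recr /= big1 ?add0r; last first.
  by move=> m _; rewrite (rzero HP Z) ?mulr0 // -ltnS.
by rewrite r1 r2 mulrDl -mulrA.
Qed.

Lemma algQ (y z s Fz Fy Gz Gy FPhi Fpsi Qz Qy Vz Vy hn1 Ln : CC) :
  z * Fy + Gy = Qz -> y * Fz + Gz = Qy ->
  Fz * Qz = Vz + (hn1 + Fpsi * z) * (s * Ln) ->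
  Fy * Qy = Vy + (hn1 + Fpsi * y) * (s * Ln) ->
  Vz - Vy = 0 -> Ln = s * FPhi -> (s = 1 \/ s = -1) ->
  Fz * (z * Fy + Gy) - (y * Fz + Gz) * Fy + (y - z) * FPhi * Fpsi = 0.
Proof.
move=> M1 M2 G1 G2 HV hL hs.
rewrite M1 M2 (_ : Qy * Fy = Fy * Qy); last exact: mulrC.
rewrite G1 G2 hL.
move/eqP: HV; rewrite subr_eq0 => /eqP ->.
by case: hs => ->; ring.
Qed.

Lemma Fc1 (chi : int -> 'cV[CC]_1) : Fc chi = chi 0%:Z 0 0.
Proof. by rewrite FcE det_mx11 mxE. Qed.
Lemma Gc1 (chi : int -> 'cV[CC]_1) : Gc chi = chi 1%:Z 0 0.
Proof. by rewrite GcE det_mx11 mxE. Qed.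

Lemma QL n (psi : int -> 'cV[CC]_n.+1) (y z : CC) :
  Fc (up z psi) * (z * Fc (up y psi) + Gc (up y psi))
  - (y * Fc (up z psi) + Gc (up z psi)) * Fc (up y psi)
  + (y - z) * Fc (up y (up z psi)) * Fc psi = 0.
Proof.
case: n psi => [|n] psi.
  rewrite !Fc1 !Gc1 !upE !mxE !zS; ring.
have Hy : forall l, up y (up z psi) l = up y (up z psi) l := fun l => erefl.
have Hz : forall l, up y (up z psi) l = up z (up y psi) l :=
  fun l => congr1 (fun f => f l) (up_comm y z psi).
have M1 := MG Hz; have M2 := MG Hy.
have G1 := GEN psi (ellQ (up y (up z psi))) Hz.
have G2 := GEN psi (ellQ (up y (up z psi))) Hy.
rewrite (rsumQ psi Hz) in G1; rewrite (rsumQ psi Hy) in G2.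
set L := ellQ _ in M1 M2 G1 G2.
have HV : lv L (\sum_(m < n.+3) ((-1) ^+ m * h psi m) *: up y psi m%:Z)
        - lv L (\sum_(m < n.+3) ((-1) ^+ m * h psi m) *: up z psi m%:Z) = 0.
  have Cr := congr1 (lv L) (cramer psi); rewrite lvZsum lv0 in Cr.
  rewrite !lvZsum -sumrB.
  transitivity ((y - z) * \sum_(m < n.+3) ((-1) ^+ m * h psi m) * lv L (psi m%:Z)); last first.
    by rewrite Cr mulr0.
  rewrite mulr_sumr; apply: eq_bigr => m _.
  rewrite (lvup L y psi m%:Z) (lvup L z psi m%:Z).
  by move: (lv L (psi m%:Z)) (lv L (psi (m%:Z + 1))) ((-1) ^+ m * h psi m) => A B C; ring.
rewrite hN in G1 G2.
exact: (algQ M1 M2 G1 G2 HV (LQsign _) (sign_cases n)).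
Qed.


Lemma fcasE N (phi : phiT N) a b c d : fcas phi a b c d = Fc (phi a b c d).
Proof. by []. Qed.
Lemma gcasE N (phi : phiT N) a b c d : gcas phi a b c d = Gc (phi a b c d).
Proof. by []. Qed.

Lemma hq3 (A B C : CC) : A - C + B = 0 -> A + B - C = 0.
Proof. by move=> H; rewrite -H; ring. Qed.
Lemma hq5 (A C P Q a b : CC) : A - C + (b - a) * P * Q = 0 -> A - (a - b) * Q * P - C = 0.
Proof. by move=> H; rewrite -H; ring. Qed.
Lemma h7 (a b c F12 F4 F2 F14 F24 F1 : CC) :
  (a - b) * F12 * F4 - (a - c) * F2 * F14 + (b - c) * F24 * F1 = 0 ->
  (a - c) * F14 * F2 - (b - c) * F24 * F1 - (a - b) * F12 * F4 = 0.
Proof. by move=> H; rewrite -[RHS]oppr0 -H; ring. Qed.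

Lemma neqs (p q d : CC) : p != q -> p - d != q - d.
Proof. by apply: contra => /eqP E; apply/eqP; apply: (addIr (- d)). Qed.

Unset Implicit Arguments.

Theorem theorem5p2
  (a1 a2 a3 d p q a b : CC)
  (hpq : p != q) (hpa : p != a) (hpb : p != b)
  (hqa : q != a) (hqb : q != b) (hab : a != b)
  (N : nat) (hN : (0 < N)%N)
  (phi : phiT N) (K : 'M[CC]_N) :
  let s1 := p - d in let s2 := q - d in let s3 := a - d in let s4 := b - d in
  let e1 := eps1 a3 d in let e2 := eps2 a2 a3 d in let e3 := eps3 a1 a2 a3 d in
  let R := Rpol e1 e2 e3 in
  (forall n m al be l : int,
      s1 *: phi (n - 1) m al be l = phi n m al be l - phi (n - 1) m al be (l + 1)) ->
  (forall n m al be l : int,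
      s2 *: phi n (m - 1) al be l = phi n m al be l - phi n (m - 1) al be (l + 1)) ->
  (forall n m al be l : int,
      s3 *: phi n m (al - 1) be l = phi n m al be l - phi n m (al - 1) be (l + 1)) ->
  (forall n m al be l : int,
      s4 *: phi n m al (be - 1) l = phi n m al be l - phi n m al (be - 1) (l + 1)) ->
  (forall n m al be l : int,
      K *m phi n m al be l =
        phi n m al be (l + 4) - e1 *: phi n m al be (l + 3)
        + e2 *: phi n m al be (l + 2) - e3 *: phi n m al be (l + 1)) ->
  forall n m al be : int,
  (* shifts: tilde = n+1, hat = m+1, check = alpha-1, dot = beta+1 *)
  let f := fun dn dm dal dbe => fcas phi (n + dn) (m + dm) (al + dal) (be + dbe) in
  let g := fun dn dm dal dbe => gcas phi (n + dn) (m + dm) (al + dal) (be + dbe) in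
  (   (s1 - s3) * f 1 0 0 0 * f 0 0 (-1) 1 - (s1 - s4) * f 0 0 0 0 * f 1 0 (-1) 1
     + (s3 - s4) * f 0 0 0 1 * f 1 0 (-1) 0 = 0) /\
  (   (s2 - s3) * f 0 1 0 0 * f 0 0 (-1) 1 - (s2 - s4) * f 0 0 0 0 * f 0 1 (-1) 1
     + (s3 - s4) * f 0 0 0 1 * f 0 1 (-1) 0 = 0) /\
  (   f 0 0 0 0 * (s3 * f 1 0 (-1) 0 + g 1 0 (-1) 0) + (s1 - s3) * f 1 0 0 0 * f 0 0 (-1) 0
     - (s1 * f 0 0 0 0 + g 0 0 0 0) * f 1 0 (-1) 0 = 0) /\
  (   f 0 0 0 0 * (s3 * f 0 1 (-1) 0 + g 0 1 (-1) 0) + (s2 - s3) * f 0 1 0 0 * f 0 0 (-1) 0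
     - (s2 * f 0 0 0 0 + g 0 0 0 0) * f 0 1 (-1) 0 = 0) /\
  (   f 1 0 0 0 * (s1 * f 0 0 0 1 + g 0 0 0 1) - (s1 - s4) * f 0 0 0 0 * f 1 0 0 1
     - (s4 * f 1 0 0 0 + g 1 0 0 0) * f 0 0 0 1 = 0) /\
  (   f 0 1 0 0 * (s2 * f 0 0 0 1 + g 0 0 0 1) - (s2 - s4) * f 0 0 0 0 * f 0 1 0 1
     - (s4 * f 0 1 0 0 + g 0 1 0 0) * f 0 0 0 1 = 0) /\
  (   (s1 - s4) * f 1 0 0 1 * f 0 1 0 0 - (s2 - s4) * f 0 1 0 1 * f 1 0 0 0
     - (s1 - s2) * f 1 1 0 0 * f 0 0 0 1 = 0) /\
  (   (s3 * f 0 0 (-1) 0 + g 0 0 (-1) 0) * f 1 1 0 1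
     - f 0 0 (-1) 0 * (g 1 1 0 1 - s4 * f 1 1 0 1)
     - R s1 s4 / ((s1 - s2) * (s1 - s3)) * f 0 1 0 1 * f 1 0 (-1) 0
     + R s2 s4 / ((s1 - s2) * (s2 - s3)) * f 1 0 0 1 * f 0 1 (-1) 0
     + (s1 + s2 + e1) * f 0 0 (-1) 0 * f 1 1 0 1
     - R s3 s4 / ((s1 - s3) * (s2 - s3)) * f 0 0 0 0 * f 1 1 (-1) 1 = 0).
Proof.
case: N hN phi K => [//|N] _ phi K.
move=> s1 s2 s3 s4 e1 e2 e3 R H1 H2 H3 H4 H5 n m al be f g.
have Hn : forall n m al be, phi (n + 1) m al be = up s1 (phi n m al be).
  move=> n0 m0 a0 b0; apply: functional_extensionality => l.
  by have := H1 (n0 + 1) m0 a0 b0 l; rewrite addrK upE => ->; rewrite subrK.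
have Hm : forall n m al be, phi n (m + 1) al be = up s2 (phi n m al be).
  move=> n0 m0 a0 b0; apply: functional_extensionality => l.
  by have := H2 n0 (m0 + 1) a0 b0 l; rewrite addrK upE => ->; rewrite subrK.
have Hal : forall n m al be, phi n m (al + 1) be = up s3 (phi n m al be).
  move=> n0 m0 a0 b0; apply: functional_extensionality => l.
  by have := H3 n0 m0 (a0 + 1) b0 l; rewrite addrK upE => ->; rewrite subrK.
have Hbe : forall n m al be, phi n m al (be + 1) = up s4 (phi n m al be).
  move=> n0 m0 a0 b0; apply: functional_extensionality => l.
  by have := H4 n0 m0 a0 (b0 + 1) l; rewrite addrK upE => ->; rewrite subrK.
rewrite {}/f {}/g !addr0.
have [al0 ->] : exists al0, al = al0 + 1 by exists (al - 1); rewrite subrK.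
rewrite addrK !fcasE !gcasE.
split; [|split; [|split; [|split; [|split; [|split; [|split]]]]]].
- by rewrite !Hn !Hal !Hbe; apply: T3.
- by rewrite !Hm !Hal !Hbe; apply: T3.
- by rewrite !Hn !Hal; apply: hq3; apply: QL.
- by rewrite !Hm !Hal; apply: hq3; apply: QL.
- rewrite !Hn !Hbe; apply: hq5.
  by have := QL (phi n m (al0 + 1) be) s4 s1; rewrite (up_comm s4 s1).
- rewrite !Hm !Hbe; apply: hq5.
  by have := QL (phi n m (al0 + 1) be) s4 s2; rewrite (up_comm s4 s2).
- by rewrite !Hn !Hm !Hbe; apply: h7; apply: T3.
- rewrite !Hn !Hm !Hal !Hbe.
  apply: E8L; rewrite ?neqs //.
Qed.
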